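(* Every $2\times2$ column-stochastic matrix is divisible in $s(2)$.
   Context: $s(2)$ denotes the set of $2\times 2$ real matrices with non-negative entries whose columns each sum to $1$; it is a monoid under matrix multiplication whose group of units is the set of $2\times2$ permutation matrices. $A\in s(2)$ is indivisible if for every decomposition $A=BC$ with $B,C\in s(2)$ exactly one of $B,C$ is a permutation matrix, and divisible otherwise. *)

(* Defs.v *)
From HB Require Import structures.
From mathcomp Require Import all_boot all_order all_algebra all_fingroup.
From mathcomp Require Import reals.
Set Implicit Arguments. Unset Strict Implicit. Unset Printing Implicit Defensive.
Import Order.TTheory GRing.Theory Num.Theory.
Local Open Scope ring_scope.

Definition s2 (R : realType) (A : 'M[R]_2) : Prop :=
  (forall i j, 0 <= A i j) /\ (forall j, \sum_(i < 2) A i j = 1).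

Definition indivisible2 (R : realType) (A : 'M[R]_2) : Prop :=
  forall B C : 'M[R]_2, s2 B -> s2 C -> A = B *m C ->
    (is_perm_mx B (+) is_perm_mx C)%B.

Definition divisible2 (R : realType) (A : 'M[R]_2) : Prop := ~ indivisible2 A.

(* Main.v *)
Require Import Defs.
From mathcomp Require Import all_boot all_order all_algebra all_fingroup.
From mathcomp Require Import reals.
From mathcomp Require Import ring lra.
Import Order.TTheory GRing.Theory Num.Theory.
Set Implicit Arguments.
Local Open Scope ring_scope.

Section S.
Variable R : realType.

Definition mk (x y : R) : 'M[R]_2 := \matrix_(i < 2, j < 2)
  if i == 0 then (if j == 0 then x else y) else (if j == 0 then 1 - x else 1 - y).

Lemma ord2 (i : 'I_2) : i = 0 \/ i = 1.
Proof. case: i => [[|[|k]] Hk]; [left|right|]; try by apply/val_inj. by []. Qed.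

Lemma sum2 (F : 'I_2 -> R) : \sum_(i < 2) F i = F 0 + F 1.
Proof. rewrite big_ord_recl big_ord1; congr (_ + F _); exact/val_inj. Qed.

Lemma mk_mul x y u v : mk x y *m mk u v = mk (x*u + y*(1-u)) (x*v + y*(1-v)).
Proof.
apply/matrixP => i j; rewrite !mxE sum2 !mxE /=.
case: (ord2 i) => ->; case: (ord2 j) => -> /=; ring.
Qed.

Lemma s2_mk A : s2 A -> A = mk (A 0 0) (A 0 1).
Proof.
move=> [_ H]; apply/matrixP => i j; rewrite !mxE.
have h0 := H 0; have h1 := H 1.
rewrite !sum2 in h0 h1.
case: (ord2 i) => ->; case: (ord2 j) => -> /=; try done.
- have -> : A 1 0 = 1 - A 0 0. rewrite -h0; ring. by [].
- have -> : A 1 1 = 1 - A 0 1. rewrite -h1; ring. by [].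
Qed.

Lemma mk_s2 x y : 0 <= x <= 1 -> 0 <= y <= 1 -> s2 (mk x y).
Proof.
move=> /andP[hx1 hx2] /andP[hy1 hy2]; split.
- move=> i j; rewrite mxE; case: (ord2 i) => ->; case: (ord2 j) => -> /=; lra.
- move=> j; rewrite sum2 /= !mxE /=.
  case: (ord2 j) => -> /=; ring.
Qed.

Lemma perm_mk x y : is_perm_mx (mk x y) -> (x = 1 /\ y = 0) \/ (x = 0 /\ y = 1).
Proof.
case/is_perm_mxP => s /matrixP H.
have H0 := H 0 0; have H1 := H 0 1.
rewrite !mxE /= in H0 H1.
case: (ord2 (s 0)) => E; rewrite E /= in H0 H1; [left|right]; split => //.
Qed.

Lemma perm_mk10 : is_perm_mx (mk 1 0).
Proof.
apply/is_perm_mxP; exists (1%g : 'S_2); apply/matrixP => i j; rewrite !mxE perm1.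
case: (ord2 i) => ->; case: (ord2 j) => -> /=; rewrite ?subrr ?subr0 //.
Qed.

Lemma perm_mk01 : is_perm_mx (mk 0 1).
Proof.
apply/is_perm_mxP; exists (tperm (0:'I_2) 1); apply/matrixP => i j; rewrite !mxE.
case: (ord2 i) => ->; case: (ord2 j) => -> /=; rewrite ?tpermL ?tpermR ?subrr ?subr0 //.
Qed.

End S.

Theorem fact2 (R : realType) (A : 'M[R]_2) : s2 A -> divisible2 A.
Proof.
move=> hA; have EA := s2_mk hA.
have [Hp _] := hA.
set a : R := A 0 0 in EA *; set b : R := A 0 1 in EA *.
have a0 : 0 <= a by apply: Hp.
have b0 : 0 <= b by apply: Hp.
have [_ Hs] := hA.
have a1 : a <= 1.
  have := Hs 0; rewrite sum2 /= => h.
  have := Hp 1 0; rewrite /a; lra.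
have b1 : b <= 1.
  have := Hs 1; rewrite sum2 /= => h.
  have := Hp 1 1; rewrite /b; lra.
move=> Hind.
have xorF : forall B C : 'M[R]_2, s2 B -> s2 C -> A = B *m C ->
   ~~ is_perm_mx B -> ~~ is_perm_mx C -> False.
  move=> B C sB sC E nB nC; have := Hind B C sB sC E.
  by rewrite (negbTE nB) (negbTE nC).
have [hab|hab] := boolP ((a < 1) && (b < 1)).
- move/andP: hab => [ha1 hb1].
  pose h : R := 1 - (1-a)*(1-b)/2.
  have hpos : 0 < (1-a)*(1-b) by apply: mulr_gt0; lra.
  have hh1 : h < 1 by rewrite /h; lra.
  have hha : a <= h.
    rewrite /h; have : (1-a)*(1-b) <= (1-a) by nra.
    lra.
  have hhb : b <= h.
    rewrite /h; have : (1-a)*(1-b) <= (1-b) by nra.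
    lra.
  have hh0 : 0 < h.
    rewrite /h; have : (1-a)*(1-b) <= 1 by nra.
    lra.
  have hsa : a < h.
    rewrite /h; have : 0 < (1-a)*(1+b) by apply: mulr_gt0; lra.
    have : (1-a)*(1+b) = 2*(1 - (1-a)*(1-b)/2 - a) by field.
    lra.
  have hsb : b < h.
    rewrite /h; have : 0 < (1-b)*(1+a) by apply: mulr_gt0; lra.
    have : (1-b)*(1+a) = 2*(1 - (1-a)*(1-b)/2 - b) by field.
    lra.
  have hq : forall x, x < h -> x / h <> 1.
    move=> x hx E; have : x = h by rewrite -(divfK (lt0r_neq0 hh0) x) E mul1r.
    lra.
  apply: (xorF (mk R h 0) (mk R (a/h) (b/h))).
  + apply: mk_s2; apply/andP; lra.
  + apply: mk_s2; apply/andP; split; rewrite ?divr_ge0 ?ler_pdivrMr //; lra.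
  + rewrite mk_mul {1}EA.  congr (mk R _ _); field; exact: lt0r_neq0.
  + apply/negP => /perm_mk; lra.
  + apply/negP => /perm_mk [] [] H1 H2.
    * exact: (hq a hsa).
    * exact: (hq b hsb).
have [hab0|hab0] := boolP ((0 < a) && (0 < b)).
- move/andP: hab0 => [ha0 hb0].
  pose m : R := a * b / 2.
  have hm0 : 0 < m by rewrite /m; apply: divr_gt0 => //; apply: mulr_gt0.
  have hma : m < a.
    rewrite /m; have : 0 < a * (2 - b) by apply: mulr_gt0; lra.
    have : a * (2 - b) = 2 * (a - a * b / 2) by field.
    lra.
  have hmb : m < b.
    rewrite /m; have : 0 < b * (2 - a) by apply: mulr_gt0; lra.
    have : b * (2 - a) = 2 * (b - a * b / 2) by field.
    lra.
  have hm1 : 0 < 1 - m by lra.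
  have hq : forall x, m < x -> (x - m) / (1 - m) <> 0.
    move=> x hx /eqP; rewrite mulf_eq0 invr_eq0 => /orP[] /eqP; lra.
  have hrng : forall x, m < x -> x <= 1 -> 0 <= (x - m) / (1 - m) <= 1.
    move=> x hx hx1; apply/andP; split.
      apply: divr_ge0; lra.
    rewrite ler_pdivrMr //; lra.
  apply: (xorF (mk R 1 m) (mk R ((a - m)/(1 - m)) ((b - m)/(1 - m)))).
  + apply: mk_s2; apply/andP; lra.
  + by apply: mk_s2; apply: hrng.
  + rewrite mk_mul {1}EA; congr (mk R _ _); field; exact: lt0r_neq0.
  + apply/negP => /perm_mk; lra.
  + apply/negP => /perm_mk [] [] H1 H2.
    * exact: (hq b hmb).
    * exact: (hq a hma).
- have Hc : (a = 1 /\ b = 0) \/ (a = 0 /\ b = 1).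
    move: hab hab0; case: (ltrP a 1); case: (ltrP b 1); case: (ltrP 0 a);
      case: (ltrP 0 b) => //= *; lra.
  have P1 : is_perm_mx A by case: Hc => [[-> ->]|[-> ->]] in EA *; rewrite EA ?perm_mk10 ?perm_mk01.
  have S10 : s2 (mk R 1 0) by apply: mk_s2; apply/andP; lra.
  have := Hind A (mk R 1 0) hA S10.
  rewrite P1 perm_mk10 /= => H; suff: false by []; apply: H.
  by rewrite EA mk_mul; congr (mk R _ _); ring.
Qed.
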